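(* Let $U=[N]$, let $\ell$ be a positive integer dividing $N$, let $\mathcal{S}=\{S_1,\dots,S_m\}$ be a collection of subsets of $U$ each of size $N/\ell$, and let $\varepsilon>0$ satisfy $\varepsilon\le 0.06$ and $\varepsilon\ge \frac1e-\left(1-\frac1\ell\right)^\ell$. Let $I_{\mathrm{rp}}$ be the $k$-RP instance with $k=\ell$, point set $\mathcal{X}=U\cup\mathcal{S}$ (an element point for each $u\in U$ and a set point for each $S\in\mathcal{S}$), distance $d(u,S)=1$ if $u\in S$ and $d(u,S)=2-\varepsilon$ if $u\notin S$ for $u\in U$, $S\in\mathcal{S}$; $d(u_1,u_2)=2$ for distinct $u_1,u_2\in U$; $d(S_1,S_2)=1$ for distinct set points; and $P$ uniform over the element points $U$. Suppose that any $\ell$ sets from $\mathcal{S}$ cover at most a $1-1/e+\varepsilon$ fraction of the elements of $U$ (a partial covering instance). Then every $k$-RP solution for $I_{\mathrm{rp}}$ consisting of $k$ set points (repetitions allowed) has cost at least $k\cdot\left(1+e^{-1+2/e}-e^{-1}-3(1+1/e)\varepsilon\right)$.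
   Context: For a finite metric space $(\mathcal{X},d)$, $\mathcal{X}_k$ is the set of multisets of exactly $k$ points of $\mathcal{X}$; for $A,B\in\mathcal{X}_k$, $d_k(A,B)$ is the minimum, over perfect matchings between the elements of $A$ and of $B$ (with multiplicity), of the sum of the distances of matched pairs; $P_k$ is the distribution of $k$ points drawn i.i.d. from $P$. A $k$-RP solution is a $K\in\mathcal{X}_k$, and its cost is $\mathbb{E}_{L\sim P_k}[d_k(K,L)]$. *)

(* Defs.v *)
From HB Require Import structures.
From mathcomp Require Import all_boot all_order all_algebra.
From mathcomp Require Import fingroup perm.
From mathcomp Require Import reals sequences exp.
Set Implicit Arguments. Unset Strict Implicit. Unset Printing Implicit Defensive.
Import Order.TTheory GRing.Theory Num.Theory.
Local Open Scope ring_scope.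

(* Points of X = U + S : element points inl u (u : 'I_N) and set points
   inr j (j : 'I_m, standing for S_j). *)
Definition rp_point (N m : nat) := ('I_N + 'I_m)%type.

Definition rp_dist (R : realType) (N m : nat) (S : 'I_m -> {set 'I_N}) (eps : R)
  (x y : rp_point N m) : R :=
  match x, y with
  | inl u, inl v => if u == v then 0 else 2
  | inl u, inr j => if u \in S j then 1 else 2 - eps
  | inr j, inl u => if u \in S j then 1 else 2 - eps
  | inr i, inr j => if i == j then 0 else 1
  end.

(* A multiset of k points is represented by a
   k-indexed family (multiplicities allowed); d_k is permutation invariant.
   The big min is seeded with the value of the identity matching, which is
   itself one of the candidates, so this is exactly the minimum. *)
Definition match_dist (R : realType) (T : Type) (d : T -> T -> R) (k : nat)
  (A B : 'I_k -> T) : R :=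
  \big[Num.min/ \sum_(i < k) d (A i) (B i)]_(s : 'S_k)
     \sum_(i < k) d (A i) (B (s i)).

(* cost of K = E_{L ~ P_k} [d_k(K, L)] with P uniform on the element points:
   L ranges uniformly over the N^k tuples of elements. *)
Definition rp_cost (R : realType) (N m : nat) (S : 'I_m -> {set 'I_N}) (eps : R)
  (k : nat) (K : 'I_k -> rp_point N m) : R :=
  (N%:R ^+ k)^-1 *
  \sum_(L : {ffun 'I_k -> 'I_N})
     match_dist (rp_dist S eps) K (fun i => inl (L i)).

(* Main.v *)
Require Import Defs.
From HB Require Import structures.
From mathcomp Require Import all_boot all_order all_algebra.
From mathcomp Require Import fingroup perm.
From mathcomp Require Import reals sequences exp.
From mathcomp Require Import ring lra.
Import Order.TTheory GRing.Theory Num.Theory.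
Local Open Scope ring_scope.

Section R.
Variable R : realType.

Lemma convpow (y y0 : R) n : 0 <= y -> 0 <= y0 ->
  y0 ^+ n.+1 + n.+1%:R * y0 ^+ n * (y - y0) <= y ^+ n.+1.
Proof.
move=> hy hy0; elim: n => [|n IH]; first by rewrite !expr1 expr0; lra.
have h1 : y * (y0 ^+ n.+1 + n.+1%:R * y0 ^+ n * (y - y0)) <= y ^+ n.+2.
  by rewrite [y ^+ n.+2]exprS ler_wpM2l.
have h2 : 0 <= n.+1%:R * y0 ^+ n * (y - y0) ^+ 2.
  by rewrite mulr_ge0 // ?sqr_ge0 // mulr_ge0 // exprn_ge0.
apply: le_trans h1.
rewrite [n.+2%:R]mulrSr !exprS.
rewrite -subr_ge0.
have -> : y * (y0 * y0 ^+ n + n.+1%:R * y0 ^+ n * (y - y0)) -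
  (y0 * (y0 * y0 ^+ n) + (n.+1%:R + 1) * (y0 * y0 ^+ n) * (y - y0)) =
  n.+1%:R * y0 ^+ n * (y - y0) ^+ 2 by rewrite expr2; ring.
done.
Qed.

Lemma e_le3 : expR (1:R) <= 3.
Proof.
have h : 1 - 6^-1 <= expR (- (6^-1 : R)) by exact: expR_ge1Dx.
have hp : 0 < expR (6^-1 : R) by apply: expR_gt0.
have h2 : expR (6^-1 : R) <= 6 / 5.
  rewrite expRN in h.
  have : (1 - 6^-1) * expR (6^-1 : R) <= (expR (6^-1 : R))^-1 * expR (6^-1 : R).
    by rewrite ler_wpM2r // ltW.
  rewrite mulVf ?lt0r_neq0 //.
  lra.
have -> : expR (1:R) = expR (6^-1) ^+ 6 by rewrite -expRM_natl mulfV // pnatr_eq0.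
have h3 : (6/5:R)^+6 <= 3 by rewrite !exprS expr0; lra.
apply: le_trans h3.
apply: lerXn2r => //; rewrite nnegrE; [exact: ltW | lra].
Qed.
End R.

Section R.
Variable R : realType.

Lemma pow_diff_le (y z : R) n : 0 <= y -> y <= z -> z <= 1 ->
  z ^+ n.+1 - y ^+ n.+1 <= n.+1%:R * (z - y).
Proof.
move=> hy hyz hz1.
have hz : 0 <= z by apply: le_trans hyz.
have h := @convpow R y z n hy hz.
have hzn : z ^+ n <= 1 by rewrite exprn_ile1.
have hzn0 : 0 <= z ^+ n by rewrite exprn_ge0.
have : n.+1%:R * z ^+ n * (z - y) <= n.+1%:R * (z - y).
  rewrite -mulrA ler_wpM2l // -[X in _ <= X]mul1r ler_wpM2r //; lra.
lra.
Qed.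

Lemma key_a (n : nat) (a : R) : 0 <= a -> a <= 1 ->
  expR (- a) - (1 - a / n.+1%:R) ^+ n.+1 <= a ^+ 2 / n.+1%:R.
Proof.
move=> ha0 ha1.
set L := n.+1%:R.
have hL : 1 <= L by rewrite /L ler1n.
have hL0 : 0 < L by lra.
set t := a / L.
have ht0 : 0 <= t by rewrite /t divr_ge0 // ltW.
have ht1 : t <= 1 by rewrite /t ler_pdivrMr // mul1r; lra.
set z := expR (- t).
have hzl : z ^+ n.+1 = expR (- a).
  rewrite /z -expRM_natl /t -/L; congr expR.
  by rewrite mulrN mulrCA mulfV ?mulr1 // lt0r_neq0.
rewrite -hzl.
have hyz : 1 - t <= z by rewrite /z; exact: expR_ge1Dx.
have hz1 : z <= 1 by rewrite /z expR_le1; lra.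
have hzp : 0 < z by apply: expR_gt0.
have hzt : z * (1 + t) <= 1.
  have h1 : z * expR t = 1 by rewrite /z expRN mulVf // lt0r_neq0 // expR_gt0.
  have : z * (1 + t) <= z * expR t by apply: ler_wpM2l; [exact: ltW | exact: expR_ge1Dx].
  by rewrite h1.
have hzt2 : z - (1 - t) <= t ^+ 2 by rewrite expr2; nra.
have hy0 : 0 <= 1 - t by lra.
have hd := pow_diff_le _ _ n hy0 hyz hz1.
apply: le_trans hd _.
have -> : a ^+ 2 / L = L * t ^+ 2.
  rewrite /t expr2; field; by rewrite addrC natr1 pnatr_eq0.
by apply: ler_wpM2l; [exact: ltW | exact: hzt2].
Qed.

Lemma key_eps (n : nat) (eps : R) :
  (expR 1)^-1 - (1 - n.+1%:R^-1) ^+ n.+1 <= eps ->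
  (expR 1)^-1 <= eps * (4 * n.+1%:R + 1).
Proof.
move=> he.
set L := n.+1%:R.
have hL : 1 <= L by rewrite /L ler1n.
have hL0 : 0 < L by lra.
set s := L^-1.
have hs0 : 0 < s by rewrite /s invr_gt0.
have hs1 : s <= 1 by rewrite /s invr_le1 // ?unitfE ?lt0r_neq0.
have hsL : L * s = 1 by rewrite /s mulfV // lt0r_neq0.
set E := expR (s / 2).
have hE : 0 < E by apply: expR_gt0.
have hEu : (1 - s / 2) * E <= 1.
  have h1 : expR (- (s/2)) * E = 1 by rewrite expRN mulVf // lt0r_neq0.
  have : (1 - s / 2) * E <= expR (- (s/2)) * E by apply: ler_wpM2r; [exact: ltW | exact: expR_ge1Dx].
  by rewrite h1.
have hEs : expR (- s) * (E * E) = 1.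
  by rewrite /E -!expRD (_ : _ + _ = 0) ?expR0 //; lra.
have hEs0 : 0 < expR (- s) by apply: expR_gt0.
have ha : 1 - s <= expR (- s) * (1 - s ^+ 2 / 4).
  have hu0 : 0 <= (1 - s/2) * E by apply: mulr_ge0; [lra | exact: ltW].
  have hsq : ((1 - s/2) * E) ^+ 2 <= 1.
    by rewrite exprn_ile1.
  have h2 : (1 - s) * (E * E) * (1 - s/2) ^+ 2 <= (1 - s ^+ 2 / 4) * (1 - s/2)^+2.
    have -> : (1 - s) * (E * E) * (1 - s/2) ^+ 2 = (1 - s) * ((1 - s/2) * E) ^+ 2.
      by rewrite !expr2; ring.
    apply: (@le_trans _ _ (1 - s)).
      rewrite -[X in _ <= X]mulr1 ler_wpM2l //; lra.
    rewrite !expr2; nra.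
  have h3 : (1 - s) * (E * E) <= 1 - s ^+ 2 / 4.
    rewrite -(ler_pM2r (_ : 0 < (1 - s/2) ^+ 2)) //.
    by rewrite exprn_gt0 //; lra.
  have : expR (- s) * ((1 - s) * (E * E)) <= expR (-s) * (1 - s ^+ 2 / 4).
    by rewrite ler_wpM2l // ltW.
  have -> : expR (- s) * ((1 - s) * (E * E)) = 1 - s.
    by rewrite mulrCA hEs mulr1.
  done.
have hb : (1 - s) ^+ n.+1 <= (expR 1)^-1 * (1 - s ^+ 2 / 4) ^+ n.+1.
  have -> : (expR 1)^-1 = expR (- s) ^+ n.+1.
    by rewrite -expRM_natl -/L mulrN hsL expRN.
  rewrite -exprMn; apply: lerXn2r => //; rewrite nnegrE; lra.
set x := s ^+ 2 / 4.
have hx0 : 0 <= x by rewrite /x; rewrite divr_ge0 // sqr_ge0.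
have hx1 : x <= 1 by rewrite /x; rewrite expr2; nra.
have hc : (1 - x) ^+ n.+1 * (1 + L * x) <= 1.
  have hp : 1 + L * x <= (1 + x) ^+ n.+1.
    have hx' : 0 <= 1 + x by lra.
    have := @convpow R (1 + x) 1 n hx' ler01.
    rewrite !expr1n mulr1 -/L; nra.
  apply: (@le_trans _ _ ((1 - x) ^+ n.+1 * (1 + x) ^+ n.+1)).
    apply: ler_wpM2l; first by rewrite exprn_ge0 //; lra.
    done.
  rewrite -exprMn exprn_ile1 //; nra.
have hLx : L * x * (4 * L) = 1.
  rewrite /x /s /L; field; by rewrite addrC natr1 pnatr_eq0.
set r := (1 - x) ^+ n.+1 in hc hb.
have hr0 : 0 <= r by rewrite /r exprn_ge0 //; lra.
have hei : 0 < (expR (1:R))^-1 by rewrite invr_gt0 expR_gt0.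
have hr : r * (4 * L + 1) <= 4 * L.
  have : r * (1 + L * x) * (4 * L) <= 4 * L by rewrite ler_piMl //; lra.
  have -> : r * (1 + L * x) * (4 * L) = r * (4 * L + 1).
    have -> : r * (1 + L * x) * (4 * L) = r * (4 * L + L * x * (4 * L)) by ring.
    by rewrite hLx.
  done.
have : (expR 1)^-1 * (1 - r) * (4 * L + 1) <= eps * (4 * L + 1).
  rewrite ler_wpM2r //; lra.
have : (expR 1)^-1 <= (expR 1)^-1 * (1 - r) * (4 * L + 1).
  rewrite -mulrA -[X in X <= _]mulr1 ler_wpM2l //; lra.
lra.
Qed.
End R.

Section R.
Variable R : realType.

Lemma real_main (n : nat) (eps al be : R) (q : 'I_n.+1 -> R) :
  (forall j, 0 <= q j <= 1) -> \sum_j q j = al ->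
  al + be <= 1 - (expR 1)^-1 + eps -> al + 2 * be <= 1 ->
  0 < eps -> eps <= 6 / 100 ->
  (expR 1)^-1 - (1 - n.+1%:R^-1) ^+ n.+1 <= eps ->
  n.+1%:R * (1 + expR (-1 + 2 / expR 1) - (expR 1)^-1
            - 3 * (1 + (expR 1)^-1) * eps)
  <= n.+1%:R * (2 - eps) - (1 - eps) *
     (n.+1%:R * be + \sum_j (1 - (1 - q j) ^+ n.+1)).
Proof.
move=> hq hsum hc1 hc2 he0 he1 heps.
set L := n.+1%:R.
have hL : 1 <= L by rewrite /L ler1n.
have hL0 : 0 < L by lra.
have he2 : 2 <= expR (1:R) by have := @expR_ge1Dx R 1; lra.
have he3 := @e_le3 R.
set ie := (expR (1:R))^-1.
have hc1' : al + be <= 1 - ie + eps := hc1.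
have hie : ie * expR 1 = 1 by rewrite /ie mulVf // lt0r_neq0 // expR_gt0.
have hie1 : 1/3 <= ie by nra.
have hie2 : ie <= 1/2 by nra.
set a := 1 - 2 * ie.
have ha0 : 0 <= a by rewrite /a; lra.
have ha1 : a <= 1/3 by rewrite /a; lra.
have -> : -1 + 2 / expR 1 = - a by rewrite /a /ie; lra.
set w := expR (- a).
have hw1 : w <= 1 by rewrite /w expR_le1; lra.
have hw0 : 1 - a <= w by rewrite /w; exact: expR_ge1Dx.
have hke := @key_eps R n eps heps; rewrite -/L -/ie in hke.
have ha1' : a <= 1 by lra.
have hka := @key_a R n a ha0 ha1'; rewrite -/L -/w in hka.
have ha2 : a ^+ 2 / L <= 2 * eps.
  rewrite ler_pdivrMr //.
  have : a ^+ 2 <= 1/9 by rewrite expr2; nra.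
  nra.
have hY : w - 2 * eps <= (1 - a / L) ^+ n.+1.
  by have := le_trans hka ha2; rewrite !lerBlDr addrC.
set y0 := 1 - a / L in hY *.
set Y := y0 ^+ n.+1 in hY *.
have hy00 : 0 <= y0.
  rewrite /y0 subr_ge0 ler_pdivrMr //; lra.
have hy01 : y0 <= 1.
  rewrite /y0 lerBlDr lerDl divr_ge0 //; lra.
set w' : R := y0 ^+ n.
have hw'1 : w' <= 1 by rewrite /w' exprn_ile1.
have hw'0 : Y <= w'.
  by rewrite /Y /w' exprS ler_piMl // exprn_ge0.
have hw'2 : 1/2 <= w' by lra.
have htan : forall j, 1 - (1 - q j) ^+ n.+1 <= 1 - Y - L * w' * ((1 - q j) - y0).
  move=> j; have /andP [hq0 hq1] := hq j.
  have hyj : 0 <= 1 - q j by lra.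
  have := @convpow R (1 - q j) y0 n hyj hy00.
  rewrite -/Y -/w' -/L; lra.
have hS : \sum_j (1 - (1 - q j) ^+ n.+1) <= L * (1 - Y) - L * w' * (a - al).
  apply: le_trans (ler_sum _ (fun j _ => htan j)) _.
  rewrite sumrB sumr_const card_ord -mulr_sumr.
  have hs2 : \sum_(i < n.+1) (1 - q i - y0) = a - al.
    rewrite !sumrB !sumr_const card_ord hsum.
    rewrite -[a / L *+ _]mulr_natr -/L divfK ?lt0r_neq0 //; lra.
  rewrite hs2 -[(1 - Y) *+ _]mulr_natl -/L.
  done.
set B := be + 1 - Y - w' * (a - al).
have hB : n.+1%:R * be + \sum_j (1 - (1 - q j) ^+ n.+1) <= L * B.
  rewrite -/L /B; lra.
have hlin : be + w' * al <= (2 * w' - 1) * (1 - ie + eps) + (1 - w').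
  have h1 : 0 <= (2 * w' - 1) * ((1 - ie + eps) - al - be) by apply: mulr_ge0; lra.
  have h2 : 0 <= (1 - w') * (1 - al - 2 * be) by apply: mulr_ge0; lra.
  nra.
have hB2 : B <= 1 + ie - w + 3 * eps.
  have h3 : 0 <= (1 - w') * eps by apply: mulr_ge0; lra.
  rewrite /B /a; nra.
have hfin : (1 - eps) * B <= (1 - eps) * (1 + ie - w + 3 * eps).
  by apply: ler_wpM2l; lra.
have hfin2 : (1 - eps) * (n.+1%:R * be + \sum_j (1 - (1 - q j) ^+ n.+1)) <= L * ((1 - eps) * B).
  rewrite mulrCA; apply: ler_wpM2l; lra.
have : 1 + w - ie - 3 * (1 + ie) * eps <= 2 - eps - (1 - eps) * (1 + ie - w + 3 * eps).
  nra.
move=> hmain.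
have : L * (1 + w - ie - 3 * (1 + ie) * eps) <= L * (2 - eps - (1 - eps) * B).
  apply: ler_wpM2l; lra.
move=> hfin3.
have hfinal : L * (1 + w - ie - 3 * (1 + ie) * eps) <= L * (2 - eps) - (1 - eps) * (n.+1%:R * be + \sum_j (1 - (1 - q j) ^+ n.+1)).
  lra.
exact: hfinal.
Qed.
End R.

Local Close Scope ring_scope.

Lemma sumbE (T : finType) (b : pred T) : (\sum_i (b i : nat) = #|[set i | b i]|)%N.
Proof.
rewrite -sum1_card [RHS]big_mkcond /=; apply: eq_bigr => i _; rewrite inE.
by case: (b i).
Qed.

Set Implicit Arguments.
Section Exp.
Variables (N l : nat).

Lemma count_in (A : {set 'I_N}) (i : 'I_l) :
  (\sum_(L : {ffun 'I_l -> 'I_N}) (L i \in A : nat) = #|A| * N ^ l.-1)%N.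
Proof.
have h : forall L : {ffun 'I_l -> 'I_N}, (L i \in A : nat) =
   (\prod_i' (if i' == i then (L i' \in A : nat) else 1))%N.
  move=> L; rewrite (bigD1 i) //= eqxx big1 ?muln1 // => j /negbTE ->; done.
rewrite (eq_bigr _ (fun L _ => h L)).
rewrite -(bigA_distr_bigA (fun i' (u : 'I_N) => if i' == i then (u \in A : nat) else 1%N)) /=.
rewrite (bigD1 i) //= eqxx.
rewrite sumbE (eq_card (B := A)); last by move=> u; rewrite inE.
congr (_ * _).
rewrite (eq_bigr (fun _ => N)); last first.
  move=> j /negbTE ->; by rewrite sum_nat_const card_ord muln1.
by rewrite prod_nat_const cardC1 card_ord.
Qed.

Lemma sum_forall (b : 'I_l -> 'I_N -> bool) :
  (\sum_(L : {ffun 'I_l -> 'I_N}) ([forall i, b i (L i)] : nat) =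
   \prod_i \sum_u (b i u : nat))%N.
Proof.
rewrite (bigA_distr_bigA (fun i u => (b i u : nat))) /=.
apply: eq_bigr => L _.
case: (boolP [forall i, b i (L i)]) => [/forallP h|].
  by rewrite big1 // => i _; rewrite h.
rewrite negb_forall => /existsP [i hi].
by rewrite (bigD1 i) //= (negbTE hi).
Qed.

Lemma count_none (A : {set 'I_N}) :
  (\sum_(L : {ffun 'I_l -> 'I_N}) ([forall i, L i \notin A] : nat) = (N - #|A|) ^ l)%N.
Proof.
rewrite (sum_forall (fun _ u => u \notin A)).
rewrite (eq_bigr (fun _ => N - #|A|)%N) ?prod_nat_const ?card_ord //.
move=> i _; rewrite sumbE.
have -> : #|[set u | u \notin A]| = #|~: A| by apply: eq_card => u; rewrite !inE.
by rewrite cardsCs setCK card_ord.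
Qed.

Lemma count_exists (A : {set 'I_N}) :
  (\sum_(L : {ffun 'I_l -> 'I_N}) ([exists i, L i \in A] : nat) = N ^ l - (N - #|A|) ^ l)%N.
Proof.
have h : forall L : {ffun 'I_l -> 'I_N},
  ([exists i, L i \in A] : nat) = (1 - ([forall i, L i \notin A] : nat))%N.
  by move=> L; rewrite -negb_exists; case: [exists i, L i \in A].
rewrite (eq_bigr _ (fun L _ => h L)).
have hs : (\sum_(L : {ffun 'I_l -> 'I_N}) 1 = N ^ l)%N.
  by rewrite sum1_card card_ffun !card_ord.
rewrite -count_none -hs sumnB // => L _.
by case: [forall i, L i \notin A].
Qed.
End Exp.

Section Comb.
Variables (N m l : nat) (S : 'I_m -> {set 'I_N}) (K : 'I_l -> 'I_m).

Definition T j := S (K j).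
Definition deg (u : 'I_N) := #|[set j | u \in T j]|.
Definition D1 := [set u | deg u == 1%N].
Definition D2 := [set u | (1 < deg u)%N].
Definition P j := T j :&: D1.
Definition Yv (L : {ffun 'I_l -> 'I_N}) : nat :=
  (#|[set i | L i \in D2]| + #|[set j | [exists i, L i \in P j]]|)%N.

Lemma good_le (L : {ffun 'I_l -> 'I_N}) (s : 'S_l) :
  (#|[set i | L (s i) \in T i]| <= Yv L)%N.
Proof.
set A := [set i | L (s i) \in T i].
set B := [set i | L (s i) \in D2].
rewrite -(cardsID B A) /Yv leq_add //.
  apply: (leq_trans (subset_leq_card (subsetIr A B))).
  have -> : B = s @^-1: [set i | L i \in D2].
    by apply/setP => i; rewrite !inE.
  by rewrite card_preimset //; exact: perm_inj.
apply: subset_leq_card; apply/subsetP => i; rewrite !inE => /andP [hB hA].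
apply/existsP; exists (s i); rewrite !inE hA /=.
have h1 : (0 < deg (L (s i)))%N.
  by rewrite /deg card_gt0; apply/set0Pn; exists i; rewrite inE.
by rewrite eqn_leq h1 andbT leqNgt.
Qed.

Lemma F1 : (\sum_j #|P j| = #|D1|)%N.
Proof.
have h : forall j, #|P j| = (\sum_u ((u \in T j) && (deg u == 1%N)) : nat)%N.
  by move=> j; rewrite sumbE; apply: eq_card => u; rewrite !inE.
rewrite (eq_bigr _ (fun j _ => h j)) exchange_big /= -sumbE.
apply: eq_bigr => u _.
have -> : (\sum_j ((u \in T j) && (deg u == 1%N) : nat) = (deg u == 1%N) * deg u)%N.
  set d := (deg u == 1%N).
  rewrite /deg -sumbE big_distrr /=; apply: eq_bigr => j _.
  by case: (u \in T j); case: d.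
by case: eqP => [->|].
Qed.

Lemma degE u : deg u = (\sum_j (u \in T j : nat))%N.
Proof. by rewrite sumbE. Qed.

Lemma F3 : (0 < l)%N -> (l %| N)%N -> (forall j, #|S j| = N %/ l)%N ->
  (#|D1| + 2 * #|D2| <= N)%N.
Proof.
move=> hl hdiv hS.
have hsum : (\sum_u deg u = N)%N.
  rewrite (eq_bigr _ (fun u _ => degE u)) exchange_big /=.
  have -> : (\sum_j \sum_u (u \in T j : nat) = \sum_(j < l) (N %/ l))%N.
    by apply: eq_bigr => j _; rewrite sumbE /T -(hS (K j)); apply: eq_card => u; rewrite inE.
  by rewrite sum_nat_const card_ord mulnC divnK.
rewrite -[X in (_ <= X)%N]hsum -!sumbE big_distrr /= -big_split /=.
apply: leq_sum => u _.
case: (deg u) => [|[|k]] //=.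
Qed.

Lemma F2 : (#|D1| + #|D2| <= #|\bigcup_(i < l) S (K i)|)%N.
Proof.
rewrite -!sumbE -big_split /=.
have -> : #|\bigcup_(i < l) S (K i)| = #|[set u | (0 < deg u)%N]|.
  apply: eq_card => u; rewrite inE.
  apply/bigcupP/idP.
    by move=> [i _ hi]; rewrite /deg card_gt0; apply/set0Pn; exists i; rewrite inE.
  by rewrite /deg card_gt0 => /set0Pn [i]; rewrite inE => hi; exists i.
rewrite -sumbE; apply: leq_sum => u _.
by case: (deg u) => [|[|k]].
Qed.



Lemma sumY : (\sum_(L : {ffun 'I_l -> 'I_N}) Yv L =
   l * (#|D2| * N ^ l.-1) + \sum_j (N ^ l - (N - #|P j|) ^ l))%N.
Proof.
rewrite big_split /=; congr (_ + _).
  have e1 : forall L : {ffun 'I_l -> 'I_N}, #|[set i | L i \in D2]| = (\sum_i (L i \in D2 : nat))%N.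
    by move=> L; rewrite sumbE.
  rewrite (eq_bigr _ (fun L _ => e1 L)) exchange_big /=.
  rewrite (eq_bigr (fun _ => #|D2| * N ^ l.-1)%N); last by move=> i _; rewrite count_in.
  by rewrite sum_nat_const card_ord.
have e2 : forall L : {ffun 'I_l -> 'I_N}, #|[set j | [exists i, L i \in P j]]| =
   (\sum_j ([exists i, L i \in P j] : nat))%N.
  by move=> L; rewrite sumbE.
rewrite (eq_bigr _ (fun L _ => e2 L)) exchange_big /=.
by apply: eq_bigr => j _; rewrite count_exists.
Qed.

Local Open Scope ring_scope.

Lemma term_eq (R : realType) (eps : R) (L : {ffun 'I_l -> 'I_N}) (s : 'S_l) :
  \sum_i rp_dist S eps (inr (K i)) (inl (L (s i))) =
  l%:R * (2 - eps) - (1 - eps) * (#|[set i | L (s i) \in T i]|)%:R.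
Proof.
rewrite (eq_bigr (fun i => (2 - eps) - (1 - eps) * ((L (s i) \in T i) : nat)%:R)); last first.
  move=> i _ /=; rewrite /T; case: (L (s i) \in S (K i)) => /=; ring.
rewrite sumrB sumr_const card_ord -mulr_sumr -natr_sum sumbE mulr_natl.
done.
Qed.

Lemma md_lb (R : realType) (eps : R) (L : {ffun 'I_l -> 'I_N}) : eps <= 1 ->
  l%:R * (2 - eps) - (1 - eps) * (Yv L)%:R <=
  match_dist (rp_dist S eps) (fun i => inr (K i)) (fun i => inl (L i)).
Proof.
move=> he.
have hs : forall s : 'S_l, l%:R * (2 - eps) - (1 - eps) * (Yv L)%:R <=
    \sum_i rp_dist S eps (inr (K i)) (inl (L (s i))).
  move=> s; rewrite term_eq lerD2l lerN2 ler_wpM2l ?subr_ge0 // ler_nat.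
  exact: good_le.
rewrite /match_dist; apply: (big_ind (fun x => _ <= x)).
- have := hs 1%g; congr (_ <= _); apply: eq_bigr => i _; by rewrite perm1.
- by move=> x y hx hy; rewrite le_min hx hy.
- by move=> s _; exact: hs.
Qed.

End Comb.
Unset Implicit Arguments.

Local Open Scope ring_scope.

Theorem lemma4 (R : realType) (N m l : nat) (S : 'I_m -> {set 'I_N}) (eps : R) :
  (0 < N)%N -> (0 < l)%N -> (l %| N)%N ->
  (forall j : 'I_m, #|S j| = (N %/ l)%N) ->
  0 < eps -> eps <= 6 / 100 ->
  (expR 1)^-1 - (1 - l%:R^-1) ^+ l <= eps ->
  (forall f : 'I_l -> 'I_m,
      #|\bigcup_(i < l) S (f i)|%:R <= (1 - (expR 1)^-1 + eps) * N%:R) ->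
  forall K : 'I_l -> 'I_m,
    l%:R * (1 + expR (-1 + 2 / expR 1) - (expR 1)^-1
            - 3 * (1 + (expR 1)^-1) * eps)
    <= rp_cost S eps (fun i => inr (K i)).
Proof.
move=> hN hl hdiv hS he0 he1 heps hcov K.
case: l hl hdiv hS heps hcov K => [//|n] hl hdiv hS heps hcov K.
set nN : R := N%:R.
have hnN : 0 < nN by rewrite /nN ltr0n.
set q : 'I_n.+1 -> R := fun j => #|P S K j|%:R / nN.
set al : R := #|D1 S K|%:R / nN.
set be : R := #|D2 S K|%:R / nN.

have hN0 : nN != 0 by rewrite lt0r_neq0.
have hPN : forall j, (#|P S K j| <= N)%N.
  by move=> j; rewrite -[X in (_ <= X)%N]card_ord max_card.
have hq : forall j, 0 <= q j <= 1.
  move=> j; apply/andP; split; first by rewrite /q divr_ge0 // ltW.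
  rewrite /q ler_pdivrMr // mul1r /nN ler_nat; exact: hPN.
have hsum : \sum_j q j = al.
  by rewrite /q /al -mulr_suml -natr_sum F1.
have hc1 : al + be <= 1 - (expR 1)^-1 + eps.
  rewrite /al /be -mulrDl -natrD ler_pdivrMr //.
  apply: le_trans (hcov K); rewrite ler_nat; exact: F2.
have hc2 : al + 2 * be <= 1.
  rewrite /al /be mulrA -mulrDl ler_pdivrMr // mul1r.
  have -> : (2 : R) * #|D2 S K|%:R = (2 * #|D2 S K|)%N%:R by rewrite natrM.
  rewrite -natrD /nN ler_nat; exact: F3.
have hr := @real_main R n eps al be q hq hsum hc1 hc2 he0 he1 heps.
apply: le_trans hr _.
rewrite /rp_cost.
set c : R := n.+1%:R * (2 - eps).
have hmd : \sum_(L : {ffun 'I_n.+1 -> 'I_N}) (c - (1 - eps) * (Yv S K L)%:R) <=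
    \sum_(L : {ffun 'I_n.+1 -> 'I_N}) match_dist (rp_dist S eps) (fun i => inr (K i)) (fun i => inl (L i)).
  apply: ler_sum => L _; apply: md_lb; lra.
have hNl : 0 < nN ^+ n.+1 by rewrite exprn_gt0.
have hinv : 0 <= (nN ^+ n.+1)^-1 by rewrite invr_ge0 ltW.
apply: le_trans (ler_wpM2l hinv hmd).
have hSum : \sum_(L : {ffun 'I_n.+1 -> 'I_N}) (c - (1 - eps) * (Yv S K L)%:R) =
  c *+ (N ^ n.+1)%N - (1 - eps) * (n.+1 * (#|D2 S K| * N ^ n) + \sum_j (N ^ n.+1 - (N - #|P S K j|) ^ n.+1))%N%:R.
  rewrite sumrB sumr_const -mulr_sumr -natr_sum sumY; congr (_ *+ _ - _).
  have := card_ffun 'I_n.+1 'I_N; rewrite !card_ord => <-.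
  by apply: eq_card.
rewrite hSum.
have hNn : nN ^+ n != 0 by rewrite expf_neq0.
have E1 : nN ^- n.+1 * (n.+1 * (#|D2 S K| * N ^ n))%N%:R = n.+1%:R * be.
  rewrite !natrM natrX -/nN /be exprS; field.
  by rewrite hNn hN0.
have E2 : forall j, nN ^- n.+1 * (N ^ n.+1 - (N - #|P S K j|) ^ n.+1)%N%:R
    = 1 - (1 - q j) ^+ n.+1.
  move=> j.
  rewrite natrB; last by rewrite leq_exp2r // leq_subr.
  rewrite !natrX natrB ?hPN // -/nN /q.
  have -> : 1 - #|P S K j|%:R / nN = (nN - #|P S K j|%:R) / nN by field.
  rewrite exprMn exprVn; field.
  by rewrite expf_neq0.
have EX : nN ^- n.+1 * (n.+1 * (#|D2 S K| * N ^ n) + \sum_j (N ^ n.+1 - (N - #|P S K j|) ^ n.+1))%N%:R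
    = n.+1%:R * be + \sum_j (1 - (1 - q j) ^+ n.+1).
  by rewrite natrD mulrDr E1 natr_sum mulr_sumr (eq_bigr _ (fun j _ => E2 j)).
have Ec : nN ^- n.+1 * (c *+ (N ^ n.+1)%N) = c.
  by rewrite -mulr_natr natrX mulrCA mulVf ?mulr1 // expf_neq0.
by rewrite mulrBr Ec [nN ^- n.+1 * ((1 - eps) * _)]mulrCA EX.
Qed.
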